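(* Let $\Sigma$ be an alphabet and let $A$, $B$, $C$ be modules over $\Sigma$ with pairwise disjoint node sets. Then $(A \bullet B) \bullet C$ and $A \bullet (B \bullet C)$ are both defined and are isomorphic modules, i.e. $(A\bullet B)\bullet C = A\bullet(B\bullet C)$ up to renaming of nodes.
   Context: An alphabet $\Sigma$ is a finite set of labels. An interface over $\Sigma$ is a finite set $R$ in which every element carries a label from $\Sigma$ and a positive integer index, such that for each label $l$, if $R$ contains exactly $k$ elements labeled $l$, these carry the indices $1,\dots,k$. An element has a fixed label, but may carry different indices in different interfaces. A module $G$ over $\Sigma$ is a finite directed graph $(V,E)$ together with two interfaces over $\Sigma$, the left interface ${}^*G\subseteq V$ and the right interface $G^*\subseteq V$ (not necessarily disjoint). Two modules are isomorphic if there is a bijection between their node sets preserving edges, membership in the left and right interfaces, labels, and indices in each interface. Harmonic pairs: for disjoint interfaces $R,S$, elements $r\in R$, $s\in S$ form a harmonic pair $\{r,s\}$ (with label $l$ and index $n$) if both have label $l$, $r$ has index $n$ in $R$ and $s$ has index $n$ in $S$. Composition: let $A,B$ be modules with disjoint node sets. For each node $x$ of $A$ or $B$ put $x'=\{x,y\}$ if $\{x,y\}$ is a harmonic pair of $A^*$ and ${}^*B$, and $x'=x$ otherwise. For a label $l$ let $m_l$ be the number of $l$-labeled harmonic pairs of $A^*$ and ${}^*B$. The module $A\bullet B$ has nodes all $x'$ ($x$ a node of $A$ or $B$) and edges all $(x',z')$ with $(x,z)$ an edge of $A$ or of $B$. Left interface ${}^*(A\bullet B)$: for each $x\in{}^*A$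 with label $l$ and index $n$ in ${}^*A$, $x'$ belongs to it with label $l$ and index $n$; for each $x\in{}^*B$ without harmonic partner in $A^*$, with label $l$ and index $n$ in ${}^*B$, $x$ belongs to it with index $p+n-m_l$, where $p$ is the number of $l$-labeled elements of ${}^*A$. Right interface $(A\bullet B)^*$: for each $x\in B^*$ with label $l$ and index $n$ in $B^*$, $x'$ belongs to it with label $l$ and index $n$; for each $x\in A^*$ without harmonic partner in ${}^*B$, with label $l$ and index $n$ in $A^*$, $x$ belongs to it with index $q+n-m_l$, where $q$ is the number of $l$-labeled elements of $B^*$. *)

(* Defs.v *)
From HB Require Import structures.
From mathcomp Require Import all_boot.
Set Implicit Arguments.
Unset Strict Implicit.
Unset Printing Implicit Defensive.

(* A (pre)module over an alphabet Sig: a finite directed graph (node, edge),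
   a label function (only meaningful on interface elements), and two
   interfaces: the left one (inL, with indices idxL) and the right one
   (inR, with indices idxR). *)
Record premodule (Sig : finType) := Premodule {
  node : finType;
  edge : rel node;
  lab : node -> Sig;
  inL : {set node};
  idxL : node -> nat;
  inR : {set node};
  idxR : node -> nat }.
Arguments node {Sig} p.
Arguments edge {Sig} p _ _.
Arguments lab {Sig} p _.
Arguments inL {Sig} p.
Arguments idxL {Sig} p _.
Arguments inR {Sig} p.
Arguments idxR {Sig} p _.

Definition interface_ok (Sig : finType) (V : finType) (lb : V -> Sig)
    (S : {set V}) (idx : V -> nat) : Prop :=
  forall l : Sig,
    {in [set x in S | lb x == l] &, injective idx} /\
    (forall x, x \in S -> lb x = l -> 1 <= idx x <= #|[set y in S | lb y == l]|).

Definition is_module (Sig : finType) (M : premodule Sig) : Prop :=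
  interface_ok (lab M) (inL M) (idxL M) /\
  interface_ok (lab M) (inR M) (idxR M).

Section Composition.
Variables (Sig : finType) (A B : premodule Sig).

(* {a, b} is a harmonic pair of A^* and *B *)
Definition harmonic (a : node A) (b : node B) : bool :=
  [&& a \in inR A, b \in inL B, lab A a == lab B b & idxR A a == idxL B b].

Definition unpairedB (b : node B) : bool := [pick a | harmonic a b] == None.
Definition unpairedA (a : node A) : bool := [pick b | harmonic a b] == None.

(* Node set of A \bullet B: the node {a,b} of a harmonic pair is represented
   by (inl a); the other nodes x are represented by themselves. *)
Definition compV : finType := (node A + {b : node B | unpairedB b})%type.

Definition primeA (a : node A) : compV := inl a.
Definition primeB (b : node B) : compV :=
  (match [pick a | harmonic a b] as o
     return [pick a | harmonic a b] = o -> compV with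
   | Some a => fun _ => inl a
   | None => fun e => inr (exist (fun b => unpairedB b) b (introT eqP e))
   end) (erefl _).

Definition comp_edge : rel compV := fun u v =>
  [exists a1, exists a2, [&& primeA a1 == u, primeA a2 == v & edge A a1 a2]] ||
  [exists b1, exists b2, [&& primeB b1 == u, primeB b2 == v & edge B b1 b2]].

Definition comp_lab (u : compV) : Sig :=
  match u with inl a => lab A a | inr b => lab B (val b) end.

Definition mcount (l : Sig) : nat :=
  #|[set ab : node A * node B | harmonic ab.1 ab.2 && (lab A ab.1 == l)]|.
Definition pcount (l : Sig) : nat := #|[set a in inL A | lab A a == l]|.
Definition qcount (l : Sig) : nat := #|[set b in inR B | lab B b == l]|.

Definition comp_inL : {set compV} :=
  [set u | match u with inl a => a \in inL A | inr b => val b \in inL B end].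

Definition comp_idxL (u : compV) : nat :=
  match u with
  | inl a => idxL A a
  | inr b => let l := lab B (val b) in (pcount l + idxL B (val b) - mcount l)%N
  end.

Definition comp_inR : {set compV} :=
  [set u | [exists b, (b \in inR B) && (primeB b == u)] ||
           [exists a, [&& a \in inR A, unpairedA a & primeA a == u]]].

Definition comp_idxR (u : compV) : nat :=
  match [pick b | (b \in inR B) && (primeB b == u)] with
  | Some b => idxR B b
  | None =>
      match u with
      | inl a => let l := lab A a in (qcount l + idxR A a - mcount l)%N
      | inr _ => 0
      end
  end.

Definition compose : premodule Sig :=
  @Premodule Sig compV comp_edge comp_lab comp_inL comp_idxL comp_inR comp_idxR.

End Composition.

Notation "A \bullet B" := (compose A B) (at level 40, left associativity).

Definition module_iso (Sig : finType) (M N : premodule Sig) : Prop :=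
  exists f : node M -> node N,
    bijective f /\
    (forall x y, edge N (f x) (f y) = edge M x y) /\
    (forall x, (f x \in inL N) = (x \in inL M)) /\
    (forall x, (f x \in inR N) = (x \in inR M)) /\
    (forall x, x \in inL M -> lab N (f x) = lab M x /\ idxL N (f x) = idxL M x) /\
    (forall x, x \in inR M -> lab N (f x) = lab M x /\ idxR N (f x) = idxR M x).

(* Main.v *)
Require Import Defs.
From HB Require Import structures.
From mathcomp Require Import all_boot zify.
Set Implicit Arguments. Unset Strict Implicit. Unset Printing Implicit Defensive.

Lemma CNT (V : finType) (S : {set V}) (idx : V -> nat) N :
  {in S &, injective idx} -> (forall u, u \in S -> 1 <= idx u <= N) ->
  (forall n, 1 <= n <= N -> exists2 u, u \in S & idx u = n) -> #|S| = N.
Proof.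
move=> inj rng sur.
have U : uniq (map idx (enum S)).
  rewrite map_inj_in_uniq ?enum_uniq //.
  by move=> x y; rewrite !mem_enum; apply: inj.
have E : map idx (enum S) =i iota 1 N.
  move=> n; rewrite mem_iota; apply/mapP/idP.
    by case=> x; rewrite mem_enum => /rng H ->; lia.
  move=> H; case: (sur n); first lia.
  by move=> u uS <-; exists u; rewrite ?mem_enum.
have := perm_size (uniq_perm U (iota_uniq 1 N) E).
by rewrite size_map size_iota -cardE.
Qed.

Lemma K (Sig V : finType) (lb : V -> Sig) S idx l n :
  interface_ok lb S idx -> 1 <= n <= #|[set y in S | lb y == l]| ->
  exists x, [/\ x \in S, lb x = l & idx x = n].
Proof.
move=> /(_ l) [inj rng] Hn.
set S' := [set y in S | lb y == l] in inj rng Hn *.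
have U : uniq (map idx (enum S')).
  rewrite map_inj_in_uniq ?enum_uniq //.
  by move=> x y; rewrite !mem_enum; apply: inj.
have sub : {subset map idx (enum S') <= iota 1 #|S'|}.
  move=> k /mapP [x]; rewrite mem_enum inE => /andP [xS /eqP xl] ->.
  by rewrite mem_iota; have := rng x xS xl; lia.
have [|_ E] := uniq_min_size U sub; first by rewrite size_iota size_map -cardE.
have : n \in iota 1 #|S'| by rewrite mem_iota; lia.
rewrite -E => /mapP [x]; rewrite mem_enum inE => /andP [xS /eqP xl] ->.
by exists x.
Qed.


Lemma inSet (T : finType) (A : {set T}) (P : pred T) x :
  (x \in [set y in A | P y]) = (x \in A) && P x.
Proof. by rewrite in_set. Qed.

Definition qR (Sig : finType) (M : premodule Sig) l := #|[set x in inR M | lab M x == l]|.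
Definition pL (Sig : finType) (M : premodule Sig) l := #|[set x in inL M | lab M x == l]|.

Section Comp.
Variables (Sig : finType) (X Y : premodule Sig).
Hypotheses (HX : is_module X) (HY : is_module Y).

Definition iX (x : node X) : node (X \bullet Y) := inl x.
Definition iY (y : node Y) : node (X \bullet Y) := primeB X y.

Lemma harm_uniqA (a a' : node X) (y : node Y) :
  harmonic a y -> harmonic a' y -> a = a'.
Proof.
case/and4P=> aR yL /eqP la /eqP ia; case/and4P=> a'R _ /eqP la' /eqP ia'.
have [inj _] := HX.2 (lab Y y).
by apply: inj; rewrite ?inE ?aR ?a'R ?la ?la' ?eqxx // ia ia'.
Qed.

Lemma harm_uniqB (a : node X) (y y' : node Y) :
  harmonic a y -> harmonic a y' -> y = y'.
Proof.
case/and4P=> aR yL /eqP la /eqP ia; case/and4P=> _ y'L /eqP la' /eqP ia'.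
have [inj _] := HY.1 (lab X a).
by apply: inj; rewrite ?inE ?yL ?y'L -?la -?la' ?eqxx // -ia -ia'.
Qed.

Lemma iXY (x : node X) (y : node Y) : iX x = iY y <-> harmonic x y.
Proof.
rewrite /iX /iY /primeB; move: (erefl _).
case: {2 3}[pick a | harmonic a y] / pickP => [a' Ha'|none] e.
  by split=> [[->]|H] //; congr inl; apply: (harm_uniqA H Ha').
by split=> // H; have := none x; rewrite H.
Qed.

Lemma iY_unp (y : node Y) (H : unpairedB X y) : iY y = inr (exist _ y H).
Proof.
rewrite /iY /primeB; move: (erefl _).
case: {2 3}[pick a | harmonic a y] / pickP => [a' Ha'|none] e.
  by exfalso; have := H; rewrite /unpairedB e.
by congr inr; apply: val_inj.
Qed.

Lemma unpB (y : node Y) : unpairedB X y <-> forall x : node X, ~~ harmonic x y.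
Proof.
rewrite /unpairedB; case: pickP => [x Hx|none]; split=> //.
  by move=> /(_ x); rewrite Hx.
by move=> _ x; rewrite none.
Qed.

Lemma unpA (x : node X) : unpairedA Y x <-> forall y : node Y, ~~ harmonic x y.
Proof.
rewrite /unpairedA; case: pickP => [y Hy|none]; split=> //.
  by move=> /(_ y); rewrite Hy.
by move=> _ y; rewrite none.
Qed.

Lemma iY_cases (y : node Y) :
  (exists2 x : node X, harmonic x y & iY y = iX x) \/
  (forall x : node X, ~~ harmonic x y).
Proof.
case: (boolP (unpairedB X y)) => [H|H]; first by right; apply/unpB.
left; move: H; rewrite /unpairedB; case: pickP => // x Hx _.
by exists x => //; symmetry; apply/iXY.
Qed.

Lemma iX_inj : injective iX. Proof. by move=> x x' []. Qed.

Lemma iY_inj : injective iY.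
Proof.
move=> y y'.
case: (iY_cases y) => [[x Hx ->]|Hy]; case: (iY_cases y') => [[x' Hx' ->]|Hy'].
- by move/iX_inj=> e; subst x'; apply: (harm_uniqB Hx Hx').
- by move=> /iXY e; have := Hy' x; rewrite e.
- by move=> /esym /iXY e; have := Hy x'; rewrite e.
have H1 : unpairedB X y by apply/unpB.
have H2 : unpairedB X y' by apply/unpB.
by rewrite (iY_unp H1) (iY_unp H2) => -[].
Qed.

Lemma surj (u : node (X \bullet Y)) : (exists x, u = iX x) \/ (exists y, u = iY y).
Proof.
case: u => [x|[y H]]; first by left; exists x.
by right; exists y; rewrite (iY_unp H).
Qed.

Lemma labX x : lab (X \bullet Y) (iX x) = lab X x. Proof. by []. Qed.
Lemma labY y : lab (X \bullet Y) (iY y) = lab Y y.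
Proof.
case: (iY_cases y) => [[x Hx ->]|Hy].
  by case/and4P: Hx => _ _ /eqP.
have H1 : unpairedB X y by apply/unpB.
by rewrite (iY_unp H1).
Qed.


Lemma surj2 (u : node (X \bullet Y)) :
  (exists x, u = iX x) \/ (exists2 y, u = iY y & forall x : node X, ~~ harmonic x y).
Proof.
case: (surj u) => [[x ->]|[y ->]]; first by left; exists x.
case: (iY_cases y) => [[x _ ->]|H]; first by left; exists x.
by right; exists y.
Qed.

Lemma inL_iX x : (iX x \in inL (X \bullet Y)) = (x \in inL X).
Proof. by rewrite inE. Qed.

Lemma inL_iY y : (forall x : node X, ~~ harmonic x y) ->
  (iY y \in inL (X \bullet Y)) = (y \in inL Y).
Proof. move=> H; have H1 : unpairedB X y by apply/unpB. by rewrite (iY_unp H1) inE. Qed.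

Lemma idxL_iY y : (forall x : node X, ~~ harmonic x y) ->
  idxL (X \bullet Y) (iY y) = pL X (lab Y y) + idxL Y y - mcount X Y (lab Y y).
Proof. move=> H; have H1 : unpairedB X y by apply/unpB. by rewrite (iY_unp H1). Qed.

Lemma inL_char u : u \in inL (X \bullet Y) <->
  (exists x, iX x = u /\ x \in inL X) \/
  (exists y, [/\ iY y = u, y \in inL Y & forall x : node X, ~~ harmonic x y]).
Proof.
case: (surj2 u) => [[x ->]|[y -> H]]; rewrite ?inL_iX ?inL_iY //; split.
- by move=> xL; left; exists x.
- case=> [[x' [/iX_inj -> //]]|[y [/esym/iXY Hy _ H]]].
  by have := H x; rewrite Hy.
- by move=> yL; right; exists y.
- case=> [[x' [/iXY Hy _]]|[y' [/iY_inj -> //]]].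
  by have := H x'; rewrite Hy.
Qed.

Lemma inR_char u : u \in inR (X \bullet Y) <->
  (exists y, iY y = u /\ y \in inR Y) \/
  (exists x, [/\ iX x = u, x \in inR X & forall y : node Y, ~~ harmonic x y]).
Proof.
rewrite inE; split.
  case/orP=> [/existsP [y /andP [yR /eqP e]]|/existsP [x /and3P [xR /unpA H /eqP e]]].
    by left; exists y.
  by right; exists x.
case=> [[y [e yR]]|[x [e xR H]]]; apply/orP.
  by left; apply/existsP; exists y; rewrite yR; apply/eqP.
right; apply/existsP; exists x; rewrite xR; apply/and3P; split=> //.
  by apply/unpA.
by apply/eqP.
Qed.

Lemma idxR_iY y : y \in inR Y -> idxR (X \bullet Y) (iY y) = idxR Y y.
Proof.
move=> yR; rewrite /= /comp_idxR; case: pickP => [y' /andP [_ /eqP e]|none].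
  by have := iY_inj e => ->.
by have := none y; rewrite yR eqxx.
Qed.

Lemma idxR_iX x : (forall y, y \in inR Y -> ~~ harmonic x y) ->
  idxR (X \bullet Y) (iX x) = qR Y (lab X x) + idxR X x - mcount X Y (lab X x).
Proof.
move=> H; rewrite /= /comp_idxR; case: pickP => [y' /andP [yR /eqP e]|none] //.
by have := H y' yR; move: e => /esym /iXY ->.
Qed.

Lemma edge_char u v : edge (X \bullet Y) u v <->
  (exists x1 x2, [/\ iX x1 = u, iX x2 = v & edge X x1 x2]) \/
  (exists y1 y2, [/\ iY y1 = u, iY y2 = v & edge Y y1 y2]).
Proof.
rewrite /= /comp_edge; split.
  case/orP=> /existsP [z1 /existsP [z2 /and3P [/eqP e1 /eqP e2 E]]].
    by left; exists z1, z2.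
  by right; exists z1, z2.
case=> [[z1 [z2 [e1 e2 E]]]|[z1 [z2 [e1 e2 E]]]]; apply/orP; [left|right];
  apply/existsP; exists z1; apply/existsP; exists z2; rewrite E andbT;
  by apply/andP; split; apply/eqP.
Qed.

Lemma bndL (M : premodule Sig) x : is_module M -> x \in inL M ->
  1 <= idxL M x <= pL M (lab M x).
Proof. by case=> [H _] xL; have [_ r] := H (lab M x); apply: r. Qed.
Lemma bndR (M : premodule Sig) x : is_module M -> x \in inR M ->
  1 <= idxR M x <= qR M (lab M x).
Proof. by case=> [_ H] xL; have [_ r] := H (lab M x); apply: r. Qed.
Lemma injL (M : premodule Sig) x x' : is_module M -> x \in inL M -> x' \in inL M ->
  lab M x = lab M x' -> idxL M x = idxL M x' -> x = x'.
Proof.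
case=> [H _] xL x'L e; have [inj _] := H (lab M x); apply: inj; by rewrite inE ?xL ?x'L ?e eqxx.
Qed.
Lemma injR (M : premodule Sig) x x' : is_module M -> x \in inR M -> x' \in inR M ->
  lab M x = lab M x' -> idxR M x = idxR M x' -> x = x'.
Proof.
case=> [_ H] xL x'L e; have [inj _] := H (lab M x); apply: inj; by rewrite inE ?xL ?x'L ?e eqxx.
Qed.
Lemma KL (M : premodule Sig) l n : is_module M -> 1 <= n <= pL M l ->
  exists x, [/\ x \in inL M, lab M x = l & idxL M x = n].
Proof. by case=> H _; apply: K. Qed.
Lemma KR (M : premodule Sig) l n : is_module M -> 1 <= n <= qR M l ->
  exists x, [/\ x \in inR M, lab M x = l & idxR M x = n].
Proof. by case=> _ H; apply: K. Qed.

Lemma unpL y : y \in inL Y ->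
  (forall x : node X, ~~ harmonic x y) <-> qR X (lab Y y) < idxL Y y.
Proof.
move=> yL; split.
  move=> H; rewrite ltnNge; apply/negP => le.
  have := bndL HY yL => b.
  have [x [xR xl xi]] := @KR X (lab Y y) (idxL Y y) HX (ltac:(lia)).
  by have := H x; rewrite /harmonic xR yL xl xi !eqxx.
move=> lt x; apply/negP => /and4P [xR _ /eqP xl /eqP xi].
have := bndR HX xR; rewrite xl xi; lia.
Qed.

Lemma unpR x : x \in inR X ->
  (forall y : node Y, ~~ harmonic x y) <-> pL Y (lab X x) < idxR X x.
Proof.
move=> xR; split.
  move=> H; rewrite ltnNge; apply/negP => le.
  have := bndR HX xR => b.
  have [y [yL yl yi]] := @KL Y (lab X x) (idxR X x) HY (ltac:(lia)).
  by have := H y; rewrite /harmonic xR yL yl yi !eqxx.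
move=> lt y; apply/negP => /and4P [_ yL /eqP xl /eqP xi].
have := bndL HY yL; rewrite -xl -xi; lia.
Qed.

Lemma mcountE l : mcount X Y l = minn (qR X l) (pL Y l).
Proof.
apply: (@CNT _ _ (fun ab : node X * node Y => idxR X ab.1)).
- move=> [a b] [a' b']; rewrite !inE /= => /andP [H /eqP al] /andP [H' /eqP al'] e.
  have ea : a = a'.
    by case/and4P: H => aR _ _ _; case/and4P: H' => a'R _ _ _; apply: (injR HX) => //; rewrite al al'.
  subst a'; by rewrite (harm_uniqB H H').
- move=> [a b]; rewrite !inE /= => /andP [H /eqP al].
  case/and4P: H => aR bL /eqP lb /eqP ib.
  have := bndR HX aR; have := bndL HY bL; rewrite -lb ib al; lia.
- move=> n Hn.
  have [a [aR al ai]] := @KR X l n HX (ltac:(lia)).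
  have [b [bL bl bi]] := @KL Y l n HY (ltac:(lia)).
  exists (a, b); last by [].
  by rewrite !inE /= /harmonic aR bL al bl ai bi !eqxx.
Qed.


Lemma infoL u l : u \in inL (X \bullet Y) -> lab (X \bullet Y) u = l ->
  (exists x, [/\ u = iX x, x \in inL X, lab X x = l & idxL (X \bullet Y) u = idxL X x]) \/
  (exists y, [/\ u = iY y, y \in inL Y, lab Y y = l, qR X l < idxL Y y &
     idxL (X \bullet Y) u = pL X l + idxL Y y - mcount X Y l]).
Proof.
case: (surj2 u) => [[x ->]|[y -> H]].
  by rewrite inL_iX labX => xL xl; left; exists x.
rewrite inL_iY // labY => yL yl; right; exists y; split=> //.
  by rewrite -yl; apply/unpL.
by rewrite idxL_iY // yl.
Qed.

Lemma infoR u l : u \in inR (X \bullet Y) -> lab (X \bullet Y) u = l ->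
  (exists y, [/\ u = iY y, y \in inR Y, lab Y y = l & idxR (X \bullet Y) u = idxR Y y]) \/
  (exists x, [/\ u = iX x, x \in inR X, lab X x = l, pL Y l < idxR X x &
     idxR (X \bullet Y) u = qR Y l + idxR X x - mcount X Y l]).
Proof.
move=> /inR_char [[y [<- yR]]|[x [<- xR H]]].
  by rewrite labY => yl; left; exists y; rewrite idxR_iY.
rewrite labX => xl; right; exists x; split=> //.
  by rewrite -xl; apply/unpR.
rewrite idxR_iX -?xl // => y _; exact: H.
Qed.

Let SL l := [set u in inL (X \bullet Y) | lab (X \bullet Y) u == l].
Let SR l := [set u in inR (X \bullet Y) | lab (X \bullet Y) u == l].

Lemma SL_inj l : {in SL l &, injective (idxL (X \bullet Y))}.
Proof.
move=> u v; rewrite !inSet => /andP [uL /eqP ul] /andP [vL /eqP vl].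
have M := mcountE l.
case: (infoL uL ul) => [[x [-> xL xl ->]]|[y [-> yL yl yq ->]]];
case: (infoL vL vl) => [[x' [-> x'L x'l ->]]|[y' [-> y'L y'l y'q ->]]].
- by move=> e; rewrite (injL HX xL x'L) // xl x'l.
- have := bndL HX xL; have := bndL HY y'L; rewrite xl y'l; lia.
- have := bndL HX x'L; have := bndL HY yL; rewrite x'l yl; lia.
- move=> e; rewrite (injL HY yL y'L) ?yl ?y'l //.
  have := bndL HY yL; have := bndL HY y'L; rewrite yl y'l in e *; lia.
Qed.

Lemma SL_rng l u : u \in SL l -> 1 <= idxL (X \bullet Y) u <= pL X l + pL Y l - mcount X Y l.
Proof.
rewrite !inSet => /andP [uL /eqP ul]; have M := mcountE l.
case: (infoL uL ul) => [[x [-> xL xl ->]]|[y [-> yL yl yq ->]]].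
- have := bndL HX xL; rewrite xl; lia.
- have := bndL HY yL; rewrite yl; lia.
Qed.

Lemma SL_sur l n : 1 <= n <= pL X l + pL Y l - mcount X Y l ->
  exists2 u, u \in SL l & idxL (X \bullet Y) u = n.
Proof.
have M := mcountE l => Hn.
case: (leqP n (pL X l)) => Hle.
  have [x [xL xl xi]] := @KL X l n HX (ltac:(lia)).
  exists (iX x) => //; by rewrite !inSet inL_iX xL labX xl eqxx.
have [y [yL yl yi]] := @KL Y l (n - pL X l + qR X l) HY (ltac:(lia)).
have H : forall x : node X, ~~ harmonic x y by apply/unpL => //; rewrite yl yi; lia.
exists (iY y).
  by rewrite !inSet inL_iY // yL labY yl eqxx.
rewrite idxL_iY // yl yi mcountE; lia.
Qed.

Lemma pL_comp l : pL (X \bullet Y) l = pL X l + pL Y l - mcount X Y l.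
Proof. exact: CNT (@SL_inj l) (@SL_rng l) (@SL_sur l). Qed.

Lemma SR_inj l : {in SR l &, injective (idxR (X \bullet Y))}.
Proof.
move=> u v; rewrite !inSet => /andP [uL /eqP ul] /andP [vL /eqP vl].
have M := mcountE l.
case: (infoR uL ul) => [[x [-> xL xl ->]]|[y [-> yL yl yq ->]]];
case: (infoR vL vl) => [[x' [-> x'L x'l ->]]|[y' [-> y'L y'l y'q ->]]].
- by move=> e; rewrite (injR HY xL x'L) // xl x'l.
- have := bndR HY xL; have := bndR HX y'L; rewrite xl y'l; lia.
- have := bndR HY x'L; have := bndR HX yL; rewrite x'l yl; lia.
- move=> e; rewrite (injR HX yL y'L) ?yl ?y'l //.
  have := bndR HX yL; have := bndR HX y'L; rewrite yl y'l in e *; lia.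
Qed.

Lemma SR_rng l u : u \in SR l -> 1 <= idxR (X \bullet Y) u <= qR Y l + qR X l - mcount X Y l.
Proof.
rewrite !inSet => /andP [uL /eqP ul]; have M := mcountE l.
case: (infoR uL ul) => [[x [-> xL xl ->]]|[y [-> yL yl yq ->]]].
- have := bndR HY xL; rewrite xl; lia.
- have := bndR HX yL; rewrite yl; lia.
Qed.

Lemma SR_sur l n : 1 <= n <= qR Y l + qR X l - mcount X Y l ->
  exists2 u, u \in SR l & idxR (X \bullet Y) u = n.
Proof.
have M := mcountE l => Hn.
case: (leqP n (qR Y l)) => Hle.
  have [y [yR yl yi]] := @KR Y l n HY (ltac:(lia)).
  exists (iY y); last by rewrite idxR_iY.
  rewrite !inSet labY yl eqxx andbT; apply/inR_char; left; by exists y.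
have [x [xR xl xi]] := @KR X l (n - qR Y l + pL Y l) HX (ltac:(lia)).
have H : forall y : node Y, ~~ harmonic x y by apply/unpR => //; rewrite xl xi; lia.
exists (iX x).
  rewrite !inSet labX xl eqxx andbT; apply/inR_char; right; by exists x.
rewrite idxR_iX ?xl ?xi ?mcountE; [lia| by move=> y _; apply: H].
Qed.

Lemma qR_comp l : qR (X \bullet Y) l = qR Y l + qR X l - mcount X Y l.
Proof. exact: CNT (@SR_inj l) (@SR_rng l) (@SR_sur l). Qed.

Lemma comp_module : is_module (X \bullet Y).
Proof.
split=> l; split.
- exact: SL_inj.
- move=> u uL ul; rewrite -/(pL _ l) pL_comp; apply: SL_rng; by rewrite inSet uL ul eqxx.
- exact: SR_inj.
- move=> u uL ul; rewrite -/(qR _ l) qR_comp; apply: SR_rng; by rewrite inSet uL ul eqxx.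
Qed.


Lemma inR_iY y : (iY y \in inR (X \bullet Y)) = (y \in inR Y).
Proof.
apply/idP/idP.
  case/inR_char => [[y' [/iY_inj -> //]]|[x [/iXY H _ H']]].
  by have := H' y; rewrite H.
by move=> yR; apply/inR_char; left; exists y.
Qed.

Lemma idxL_iX x : idxL (X \bullet Y) (iX x) = idxL X x. Proof. by []. Qed.

Lemma harm_iX_any (x : node X) (y : node Y) : harmonic x y -> iY y = iX x.
Proof. by move=> H; symmetry; apply/iXY. Qed.

End Comp.

Section Triple.
Variables (Sig : finType) (A B C : premodule Sig).
Hypotheses (HA : is_module A) (HB : is_module B) (HC : is_module C).
Let HAB := comp_module HA HB.
Let HBC := comp_module HB HC.
Notation AB := (A \bullet B).
Notation BC := (B \bullet C).
Notation L3 := (AB \bullet C).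
Notation R3 := (A \bullet BC).

Lemma h_ab (a : node A) (b : node B) :
  harmonic (B := BC) a (iX C b) = harmonic a b.
Proof. by rewrite /harmonic inL_iX labX idxL_iX. Qed.

Lemma h_bc (b : node B) (c : node C) :
  harmonic (A := AB) (iY A b) c = harmonic b c.
Proof.
rewrite /harmonic (inR_iY HA HB) labY //.
apply/idP/idP => /and4P [bR cL le ie]; apply/and4P; split => //.
  by rewrite idxR_iY in ie.
by rewrite idxR_iY.
Qed.

Lemma h_ac (a : node A) (c : node C) :
  harmonic (A := AB) (iX B a) c = harmonic (B := BC) a (iY B c).
Proof.
have MAB := mcountE HA HB (lab C c); have MBC := mcountE HB HC (lab C c).
apply/idP/idP.
  case/and4P => aR cL /eqP al /eqP ai.
  rewrite labX in al.
  case/inR_char: aR => [[b [/esym /(iXY HA) hab bR]]|[a' [/iX_inj ea aR H]]]; last subst a'.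
    move: ai; rewrite -(harm_iX_any HA hab) idxR_iY // => ai.
    have hbc : harmonic b c by rewrite /harmonic bR cL ai eqxx; case/and4P: hab => _ _ /eqP <- _; rewrite al eqxx.
    rewrite (harm_iX_any HB hbc) h_ab; exact: hab.
  move: ai; rewrite (idxR_iX HA); last by move=> y _; apply: H.
  rewrite al => ai.
  have ua : pL B (lab C c) < idxR A a by rewrite -al; apply/(unpR HA HB).
  have bA := bndR HA aR; rewrite al in bA.
  have Hc : forall b : node B, ~~ harmonic b c.
    move=> b; apply/negP => /and4P [bR _ /eqP bl /eqP bi].
    have := bndR HB bR; rewrite bl bi; lia.
  have uc : qR B (lab C c) < idxL C c by apply/(unpL HB HC).
  have bC := bndL HC cL.
  rewrite /harmonic aR (inL_iY Hc) cL (labY HB) al eqxx (idxL_iY Hc) /=.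
  apply/eqP; lia.
case/and4P => aR cL /eqP al /eqP ai.
rewrite (labY HB) in al.
case/(inL_char HB HC): cL => [[b [hbc bL]]|[c' [/(iY_inj HB HC) ec cL H]]]; last subst c'.
  move/(iXY HB): (hbc) => hbc'.
  move: ai; rewrite -hbc idxL_iX => ai.
  have hab : harmonic a b.
    rewrite /harmonic aR bL ai eqxx /= andbT.
    by case/and4P: hbc' => _ _ /eqP -> _; rewrite al.
  by rewrite -(harm_iX_any HA hab) h_bc.
move: ai; rewrite idxL_iY // => ai.
have uc : qR B (lab C c) < idxL C c by apply/(unpL HB HC).
have bC := bndL HC cL.
have bA := bndR HA aR; rewrite al in bA.
have Ha : forall b : node B, ~~ harmonic a b.
  move=> b; apply/negP => /and4P [_ bL /eqP bl /eqP bi].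
  have := bndL HB bL; rewrite -bl -bi al; lia.
have ua : pL B (lab C c) < idxR A a by rewrite -al; apply/(unpR HA HB).
rewrite /harmonic cL labX al eqxx !andTb.
apply/andP; split.
  by apply/inR_char; right; exists a.
rewrite (idxR_iX HA); last by move=> y _; apply: Ha.
rewrite al; apply/eqP; lia.
Qed.


Definition Lm (x : (node A + node B) + node C) : node L3 :=
  match x with
  | inl (inl a) => iX C (iX B a)
  | inl (inr b) => iX C (iY A b)
  | inr c => iY AB c
  end.
Definition Rm (x : (node A + node B) + node C) : node R3 :=
  match x with
  | inl (inl a) => iX BC a
  | inl (inr b) => iY A (iX C b)
  | inr c => iY A (iY B c)
  end.

Lemma glue_of (P : Prop) (l1 l2 : node L3) (r1 r2 : node R3) :
  (l1 = l2 <-> P) -> (r1 = r2 <-> P) -> (l1 = l2 <-> r1 = r2).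
Proof. tauto. Qed.
Lemma glue_sym (l1 l2 : node L3) (r1 r2 : node R3) :
  (l1 = l2 <-> r1 = r2) -> (l2 = l1 <-> r2 = r1).
Proof. by move=> H; split=> /esym/H/esym. Qed.

Lemma glue x y : Lm x = Lm y <-> Rm x = Rm y.
Proof.
have AA a a' : Lm (inl (inl a)) = Lm (inl (inl a')) <-> Rm (inl (inl a)) = Rm (inl (inl a')).
  apply: (glue_of (P := a = a')).
    by split=> [/iX_inj/iX_inj|->].
  by split=> [/iX_inj|->].
have BB b b' : Lm (inl (inr b)) = Lm (inl (inr b')) <-> Rm (inl (inr b)) = Rm (inl (inr b')).
  apply: (glue_of (P := b = b')).
    by split=> [/iX_inj/(iY_inj HA HB)|->].
  by split=> [/(iY_inj HA HBC)/iX_inj|->].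
have CC c c' : Lm (inr c) = Lm (inr c') <-> Rm (inr c) = Rm (inr c').
  apply: (glue_of (P := c = c')).
    by split=> [/(iY_inj HAB HC)|->].
  by split=> [/(iY_inj HA HBC)/(iY_inj HB HC)|->].
have AB' a b : Lm (inl (inl a)) = Lm (inl (inr b)) <-> Rm (inl (inl a)) = Rm (inl (inr b)).
  apply: (glue_of (P := harmonic a b)).
    split=> [/iX_inj/(iXY HA)//|/(iXY HA) e].
    by change (iX C (iX B a) = iX C (iY A b)); rewrite e.
  by rewrite (iXY HA) h_ab.
have AC a c : Lm (inl (inl a)) = Lm (inr c) <-> Rm (inl (inl a)) = Rm (inr c).
  apply: (glue_of (P := harmonic (B := BC) a (iY B c))).
    by rewrite (iXY HAB) h_ac.
  exact: iXY.
have BC' b c : Lm (inl (inr b)) = Lm (inr c) <-> Rm (inl (inr b)) = Rm (inr c).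
  apply: (glue_of (P := harmonic b c)).
    by rewrite -h_bc (iXY HAB).
  rewrite -(iXY HB); change (iY A (iX C b) = iY A (iY B c) <-> iX C b = iY B c).
  by split=> [/(iY_inj HA HBC)|->].
case: x => [[a|b]|c]; case: y => [[a'|b']|c'] //; by apply: glue_sym.
Qed.

Lemma surjL (u : node L3) : exists x, Lm x == u.
Proof.
case: (surj u) => [[w ->]|[c ->]]; last by exists (inr c).
by case: (surj w) => [[a ->]|[b ->]]; [exists (inl (inl a))|exists (inl (inr b))].
Qed.

Lemma surjR (u : node R3) : exists x, Rm x == u.
Proof.
case: (surj u) => [[a ->]|[w ->]]; first by exists (inl (inl a)).
by case: (surj w) => [[b ->]|[c ->]]; [exists (inl (inr b))|exists (inr c)].
Qed.

Definition fiso (u : node L3) : node R3 := Rm (xchoose (surjL u)).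
Definition giso (v : node R3) : node L3 := Lm (xchoose (surjR v)).

Lemma fL x : fiso (Lm x) = Rm x.
Proof. rewrite /fiso; apply/glue; apply/eqP; exact: (xchooseP (surjL (Lm x))). Qed.
Lemma gR x : giso (Rm x) = Lm x.
Proof. rewrite /giso; apply/glue; apply/eqP; exact: (xchooseP (surjR (Rm x))). Qed.

Lemma f_bij : bijective fiso.
Proof.
exists giso.
  move=> u; have [x /eqP <-] := surjL u; by rewrite fL gR.
move=> v; have [x /eqP <-] := surjR v; by rewrite gR fL.
Qed.

Lemma transf u x : Lm x = u <-> Rm x = fiso u.
Proof.
have [y /eqP <-] := surjL u; rewrite fL; exact: glue.
Qed.


Lemma LmA a : Lm (inl (inl a)) = iX C (iX B a). Proof. by []. Qed.
Lemma LmB b : Lm (inl (inr b)) = iX C (iY A b). Proof. by []. Qed.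
Lemma LmC c : Lm (inr c) = iY AB c. Proof. by []. Qed.
Lemma RmA a : Rm (inl (inl a)) = iX BC a. Proof. by []. Qed.
Lemma RmB b : Rm (inl (inr b)) = iY A (iX C b). Proof. by []. Qed.
Lemma RmC c : Rm (inr c) = iY A (iY B c). Proof. by []. Qed.

Definition e3 (x y : (node A + node B) + node C) : bool :=
  match x, y with
  | inl (inl a), inl (inl a') => edge A a a'
  | inl (inr b), inl (inr b') => edge B b b'
  | inr c, inr c' => edge C c c'
  | _, _ => false
  end.

Lemma edgeL u v : edge L3 u v <-> exists x y, [/\ Lm x = u, Lm y = v & e3 x y].
Proof.
split.
  case/edge_char => [[w1 [w2 [<- <- /edge_char E]]]|[c1 [c2 [<- <- E]]]].
    case: E => [[a1 [a2 [<- <- E]]]|[b1 [b2 [<- <- E]]]].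
      by exists (inl (inl a1)), (inl (inl a2)).
    by exists (inl (inr b1)), (inl (inr b2)).
  by exists (inr c1), (inr c2).
case=> [[[a1|b1]|c1] [[[a2|b2]|c2] [<- <- E]]] //; apply/edge_char.
- left; exists (iX B a1), (iX B a2); split=> //; apply/edge_char; left; by exists a1, a2.
- left; exists (iY A b1), (iY A b2); split=> //; apply/edge_char; right; by exists b1, b2.
- right; by exists c1, c2.
Qed.

Lemma edgeR u v : edge R3 u v <-> exists x y, [/\ Rm x = u, Rm y = v & e3 x y].
Proof.
split.
  case/edge_char => [[a1 [a2 [<- <- E]]]|[w1 [w2 [<- <- /edge_char E]]]].
    by exists (inl (inl a1)), (inl (inl a2)).
  case: E => [[b1 [b2 [<- <- E]]]|[c1 [c2 [<- <- E]]]].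
    by exists (inl (inr b1)), (inl (inr b2)).
  by exists (inr c1), (inr c2).
case=> [[[a1|b1]|c1] [[[a2|b2]|c2] [<- <- E]]] //; apply/edge_char.
- left; by exists a1, a2.
- right; exists (iX C b1), (iX C b2); split=> //; apply/edge_char; left; by exists b1, b2.
- right; exists (iY B c1), (iY B c2); split=> //; apply/edge_char; right; by exists c1, c2.
Qed.

Lemma f_edge u v : edge R3 (fiso u) (fiso v) = edge L3 u v.
Proof.
apply/idP/idP.
  case/edgeR => x [y [/transf ex /transf ey E]]; apply/edgeL; by exists x, y.
case/edgeL => x [y [/transf ex /transf ey E]]; apply/edgeR; by exists x, y.
Qed.

Definition PhiL (N : Type) (P : (node A + node B) + node C -> N) (u : N) : Prop :=
  (exists a, P (inl (inl a)) = u /\ a \in inL A) \/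
  (exists b, [/\ P (inl (inr b)) = u, b \in inL B & forall a, P (inl (inl a)) <> u]) \/
  (exists c, [/\ P (inr c) = u, c \in inL C, forall a, P (inl (inl a)) <> u &
                 forall b, P (inl (inr b)) <> u]).

Definition PsiR (N : Type) (P : (node A + node B) + node C -> N) (u : N) : Prop :=
  (exists c, P (inr c) = u /\ c \in inR C) \/
  (exists b, [/\ P (inl (inr b)) = u, b \in inR B & forall c, P (inr c) <> u]) \/
  (exists a, [/\ P (inl (inl a)) = u, a \in inR A, forall c, P (inr c) <> u &
                 forall b, P (inl (inr b)) <> u]).

Lemma Phi_tr N M (P : _ -> N) (Q : _ -> M) u v :
  (forall x, P x = u <-> Q x = v) -> PhiL P u -> PhiL Q v.
Proof.
move=> H [[a [/H e aL]]|[[b [/H e bL na]]|[c [/H e cL na nb]]]].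
- by left; exists a.
- by right; left; exists b; split=> // a' /H; apply: na.
- right; right; exists c; split=> // [a' /H|b' /H]; [apply: na|apply: nb].
Qed.

Lemma Psi_tr N M (P : _ -> N) (Q : _ -> M) u v :
  (forall x, P x = u <-> Q x = v) -> PsiR P u -> PsiR Q v.
Proof.
move=> H [[c [/H e cL]]|[[b [/H e bL na]]|[a [/H e aL na nb]]]].
- by left; exists c.
- by right; left; exists b; split=> // a' /H; apply: na.
- right; right; exists a; split=> // [a' /H|b' /H]; [apply: na|apply: nb].
Qed.


Lemma inL_L u : u \in inL L3 <-> PhiL Lm u.
Proof.
split.
  case/(inL_char HAB HC) => [[w [<- /(inL_char HA HB) wL]]|[c [<- cL Hc]]].
    case: wL => [[a [<- aL]]|[b [<- bL Hb]]].
      by left; exists a.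
    right; left; exists b; split=> // a; rewrite ?LmA ?LmB ?LmC ?RmA ?RmB ?RmC => /iX_inj /(iXY HA) h.
    by have := Hb a; rewrite h.
  right; right; exists c; split=> //.
    move=> a; rewrite ?LmA ?LmB ?LmC ?RmA ?RmB ?RmC => /(iXY HAB) h; by have := Hc (iX B a); rewrite h.
  move=> b; rewrite ?LmA ?LmB ?LmC ?RmA ?RmB ?RmC => /(iXY HAB) h; by have := Hc (iY A b); rewrite h.
case=> [[a [<- aL]]|[[b [<- bL na]]|[c [<- cL na nb]]]].
- by rewrite LmA; apply/(inL_char HAB HC); left; exists (iX B a); rewrite inL_iX.
- rewrite LmB; apply/(inL_char HAB HC); left; exists (iY A b); split=> //.
  apply/(inL_char HA HB); right; exists b; split=> // a; apply/negP.
  move=> /(harm_iX_any HA) e; apply: (na a); by rewrite ?LmA ?LmB ?LmC ?RmA ?RmB ?RmC e.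
- rewrite LmC; apply/(inL_char HAB HC); right; exists c; split=> // w; apply/negP.
  move=> /(harm_iX_any HAB) e.
  case: (surj w) e => [[a ->] e|[b ->] e]; [apply: (na a)|apply: (nb b)];
    by rewrite ?LmA ?LmB ?LmC ?RmA ?RmB ?RmC e.
Qed.

Lemma inL_R u : u \in inL R3 <-> PhiL Rm u.
Proof.
split.
  case/(inL_char HA HBC) => [[a [<- aL]]|[w [<- /(inL_char HB HC) wL Hw]]].
    by left; exists a.
  case: wL Hw => [[b [<- bL]] Hw|[c [<- cL Hc]] Hw].
    right; left; exists b; split=> // a; rewrite ?LmA ?LmB ?LmC ?RmA ?RmB ?RmC => /(iXY HA) h.
    by have := Hw a; rewrite h.
  right; right; exists c; split=> //.
    move=> a; rewrite ?LmA ?LmB ?LmC ?RmA ?RmB ?RmC => /(iXY HA) h; by have := Hw a; rewrite h.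
  move=> b; rewrite ?LmA ?LmB ?LmC ?RmA ?RmB ?RmC => /(iY_inj HA HBC) /(iXY HB) h; by have := Hc b; rewrite h.
case=> [[a [<- aL]]|[[b [<- bL na]]|[c [<- cL na nb]]]].
- by rewrite RmA; apply/(inL_char HA HBC); left; exists a.
- rewrite RmB; apply/(inL_char HA HBC); right; exists (iX C b); split=> //.
    by rewrite inL_iX.
  move=> a; apply/negP => /(harm_iX_any HA) e; apply: (na a); by rewrite ?LmA ?LmB ?LmC ?RmA ?RmB ?RmC e.
- rewrite RmC; apply/(inL_char HA HBC); right; exists (iY B c); split=> //.
    apply/(inL_char HB HC); right; exists c; split=> // b; apply/negP.
    move=> /(harm_iX_any HB) e; apply: (nb b); by rewrite ?LmA ?LmB ?LmC ?RmA ?RmB ?RmC e.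
  move=> a; apply/negP => /(harm_iX_any HA) e; apply: (na a); by rewrite ?LmA ?LmB ?LmC ?RmA ?RmB ?RmC e.
Qed.

Lemma inR_L u : u \in inR L3 <-> PsiR Lm u.
Proof.
split.
  case/inR_char => [[c [<- cR]]|[w [<- /inR_char wR Hw]]].
    by left; exists c.
  case: wR Hw => [[b [<- bR]] Hw|[a [<- aR Ha]] Hw].
    right; left; exists b; split=> // c; rewrite ?LmA ?LmB ?LmC ?RmA ?RmB ?RmC => /esym /(iXY HAB) h.
    by have := Hw c; rewrite h.
  right; right; exists a; split=> //.
    move=> c; rewrite ?LmA ?LmB ?LmC ?RmA ?RmB ?RmC => /esym /(iXY HAB) h; by have := Hw c; rewrite h.
  move=> b; rewrite ?LmA ?LmB ?LmC ?RmA ?RmB ?RmC => /iX_inj /esym /(iXY HA) h; by have := Ha b; rewrite h.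
case=> [[c [<- cR]]|[[b [<- bR nc]]|[a [<- aR nc nb]]]].
- by rewrite LmC; apply/inR_char; left; exists c.
- rewrite LmB; apply/inR_char; right; exists (iY A b); split=> //.
    by rewrite (inR_iY HA HB).
  move=> c; apply/negP => /(harm_iX_any HAB) e; apply: (nc c); by rewrite ?LmA ?LmB ?LmC ?RmA ?RmB ?RmC e.
- rewrite LmA; apply/inR_char; right; exists (iX B a); split=> //.
    apply/inR_char; right; exists a; split=> // b; apply/negP.
    move=> /(harm_iX_any HA) e; apply: (nb b); by rewrite ?LmA ?LmB ?LmC ?RmA ?RmB ?RmC e.
  move=> c; apply/negP => /(harm_iX_any HAB) e; apply: (nc c); by rewrite ?LmA ?LmB ?LmC ?RmA ?RmB ?RmC e.
Qed.

Lemma inR_R u : u \in inR R3 <-> PsiR Rm u.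
Proof.
split.
  case/inR_char => [[w [<- /inR_char wR]]|[a [<- aR Ha]]].
    case: wR => [[c [<- cR]]|[b [<- bR Hb]]].
      by left; exists c.
    right; left; exists b; split=> // c; rewrite ?LmA ?LmB ?LmC ?RmA ?RmB ?RmC => /(iY_inj HA HBC) /esym /(iXY HB) h.
    by have := Hb c; rewrite h.
  right; right; exists a; split=> //.
    move=> c; rewrite ?LmA ?LmB ?LmC ?RmA ?RmB ?RmC => /esym /(iXY HA) h; by have := Ha (iY B c); rewrite h.
  move=> b; rewrite ?LmA ?LmB ?LmC ?RmA ?RmB ?RmC => /esym /(iXY HA) h; by have := Ha (iX C b); rewrite h.
case=> [[c [<- cR]]|[[b [<- bR nc]]|[a [<- aR nc nb]]]].
- rewrite RmC; apply/inR_char; left; exists (iY B c); split=> //.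
  by rewrite (inR_iY HB HC).
- rewrite RmB; apply/inR_char; left; exists (iX C b); split=> //.
  apply/inR_char; right; exists b; split=> // c; apply/negP.
  move=> /(harm_iX_any HB) e; apply: (nc c); by rewrite ?LmA ?LmB ?LmC ?RmA ?RmB ?RmC e.
- rewrite RmA; apply/inR_char; right; exists a; split=> // w; apply/negP.
  move=> /(harm_iX_any HA) e.
  case: (surj w) e => [[b ->] e|[c ->] e]; [apply: (nb b)|apply: (nc c)];
    by rewrite ?LmA ?LmB ?LmC ?RmA ?RmB ?RmC e.
Qed.


Lemma lab_LR x : lab R3 (Rm x) = lab L3 (Lm x).
Proof.
case: x => [[a|b]|c] //.
- by rewrite RmB LmB (@labY _ A BC HA) !labX (@labY _ A B HA).
- by rewrite RmC LmC (@labY _ A BC HA) (@labY _ B C HB) (@labY _ AB C HAB).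
Qed.

Lemma f_lab u : lab R3 (fiso u) = lab L3 u.
Proof. by have [x /eqP <-] := surjL u; rewrite fL lab_LR. Qed.

Lemma f_idxL u : u \in inL L3 -> idxL R3 (fiso u) = idxL L3 u.
Proof.
case/inL_L => [[a [<- aL]]|[[b [<- bL na]]|[c [<- cL na nb]]]]; rewrite fL.
- by [].
- have Ha : forall a : node A, ~~ harmonic a b.
    move=> a; apply/negP => /(harm_iX_any HA) e; apply: (na a); by rewrite LmA LmB e.
  have Ha' : forall a : node A, ~~ harmonic (B := BC) a (iX C b) by move=> a; rewrite h_ab.
  rewrite RmB LmB idxL_iX (idxL_iY Ha') (idxL_iY Ha) labX idxL_iX.
  have := (unpL HA HB bL).1 Ha; have := bndL HB bL.
  have := mcountE HA HB (lab B b); have := mcountE HA HBC (lab B b).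
  have := pL_comp HB HC (lab B b); have := mcountE HB HC (lab B b).
  lia.
- have Hw : forall w : node AB, ~~ harmonic w c.
    move=> w; apply/negP => /(harm_iX_any HAB) e.
    case: (surj w) e => [[a ->] e|[b ->] e]; [apply: (na a)|apply: (nb b)];
      by rewrite ?LmA ?LmB LmC e.
  have Hb : forall b : node B, ~~ harmonic b c by move=> b; rewrite -h_bc.
  have Ha : forall a : node A, ~~ harmonic (B := BC) a (iY B c) by move=> a; rewrite -h_ac.
  rewrite RmC LmC (idxL_iY Hw) (idxL_iY Ha) (labY HB) (idxL_iY Hb).
  have := (unpL HAB HC cL).1 Hw; have := bndL HC cL.
  have := mcountE HA HB (lab C c); have := mcountE HA HBC (lab C c).
  have := pL_comp HB HC (lab C c); have := mcountE HB HC (lab C c).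
  have := pL_comp HA HB (lab C c); have := qR_comp HA HB (lab C c).
  have := mcountE HAB HC (lab C c).
  lia.
Qed.

Lemma f_idxR u : u \in inR L3 -> idxR R3 (fiso u) = idxR L3 u.
Proof.
case/inR_L => [[c [<- cR]]|[[b [<- bR nc]]|[a [<- aR nc nb]]]]; rewrite fL.
- rewrite RmC LmC (idxR_iY HAB HC) // (idxR_iY HA HBC) ?(idxR_iY HB HC) //.
  by rewrite (inR_iY HB HC).
- have Hc : forall c : node C, ~~ harmonic b c.
    move=> c; rewrite -h_bc; apply/negP => /(harm_iX_any HAB) e; apply: (nc c).
    by rewrite LmB LmC e.
  have Hc' : forall c : node C, ~~ harmonic (A := AB) (iY A b) c by move=> c; rewrite h_bc.
  have bBC : iX C b \in inR BC by apply/inR_char; right; exists b.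
  rewrite RmB LmB (idxR_iY HA HBC) // (idxR_iX HB); last by move=> y _; apply: Hc.
  rewrite (idxR_iX HAB); last by move=> y _; apply: Hc'.
  rewrite (idxR_iY HA HB) // (labY HA).
  have := (unpR HB HC bR).1 Hc; have := bndR HB bR.
  have := mcountE HA HB (lab B b); have := mcountE HAB HC (lab B b).
  have := qR_comp HA HB (lab B b); have := mcountE HB HC (lab B b).
  lia.
- have Hb : forall b : node B, ~~ harmonic a b.
    move=> b; apply/negP => /(harm_iX_any HA) e; apply: (nb b); by rewrite LmA LmB e.
  have Hc : forall c : node C, ~~ harmonic (A := AB) (iX B a) c.
    move=> c; apply/negP => /(harm_iX_any HAB) e; apply: (nc c); by rewrite LmA LmC e.
  have Hw : forall w : node BC, ~~ harmonic a w.
    move=> w; case: (surj w) => [[b ->]|[c ->]]; [rewrite h_ab|rewrite -h_ac]; by [].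
  have aAB : iX B a \in inR AB by apply/inR_char; right; exists a.
  have := (unpR HAB HC aAB).1 Hc; rewrite labX.
  rewrite RmA LmA (@idxR_iX _ A BC HA); last by move=> y _; apply: Hw.
  rewrite (idxR_iX HAB); last by move=> y _; apply: Hc.
  rewrite labX (idxR_iX HA); last by move=> y _; apply: Hb.
  have := (unpR HA HB aR).1 Hb; have := (unpR HA HBC aR).1 Hw; have := bndR HA aR.
  have := mcountE HA HB (lab A a); have := mcountE HAB HC (lab A a).
  have := qR_comp HA HB (lab A a); have := mcountE HB HC (lab A a).
  have := mcountE HA HBC (lab A a); have := qR_comp HB HC (lab A a).
  have := pL_comp HB HC (lab A a).
  lia.
Qed.

End Triple.

Theorem mainTheorem1 (Sig : finType) (A B C : premodule Sig) :
  is_module A -> is_module B -> is_module C ->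
  module_iso ((A \bullet B) \bullet C) (A \bullet (B \bullet C)).
Proof.
move=> HA HB HC; exists (@fiso _ A B C); split; first exact: f_bij.
split; first exact: f_edge.
have T := transf HA HB HC.
split.
  move=> x; apply/idP/idP.
    move/(inL_R HA HB HC) => H; apply/(inL_L HA HB HC).
    by eapply Phi_tr; last exact: H; move=> y; apply: iff_sym.
  move/(inL_L HA HB HC) => H; apply/(inL_R HA HB HC).
  by eapply Phi_tr; last exact: H.
split.
  move=> x; apply/idP/idP.
    move/(inR_R HA HB HC) => H; apply/(inR_L HA HB).
    by eapply Psi_tr; last exact: H; move=> y; apply: iff_sym.
  move/(inR_L HA HB) => H; apply/(inR_R HA HB HC).
  by eapply Psi_tr; last exact: H.
split=> x xI; split; rewrite ?f_lab //.
  exact: f_idxL.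
exact: f_idxR.
Qed.
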